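(* Let $G=\langle S_k\mid K\rangle$ be a finitely generated semigroup as described in the context with $K$ primitive, $\mathcal{A}$ a finite alphabet, and $X_{\mathbf{A}}$ a hom Markov tree shift on $G$ with $\mathbf{A}=(A,A,\dots,A)$. Let $\mathbf{G}=(\mathbf{V},\mathbf{E})$ be the graph representation of $X_{\mathbf{A}}$. Then (i) $\mathbf{G}$ is strongly connected if and only if $A$ is irreducible; (ii) $\mathbf{G}$ is strongly connected and contains a pivot if and only if $A$ is primitive.
   Context: Let $K$ be a $k\times k$ $\{0,1\}$-matrix indexed by $S_k=\{s_1,\dots,s_k\}$ and $G=\langle S_k\mid K\rangle$ the semigroup generated by $S_k$ with relations $s_is_j=1_G$ iff $K(s_i,s_j)=0$. Every $g\in G$ has a unique minimal representation $g=g_1\cdots g_n$ ($g_l\in S_k$, $K(g_l,g_{l+1})=1$), $|g|=n$. For a $k$-tuple $\mathbf{A}=(A_1,\dots,A_k)$ of $\{0,1\}$-matrices indexed by $\mathcal{A}$, $X_{\mathbf{A}}=\{t\in\mathcal{A}^G: A_i(t_g,t_{gs_i})=1 \text{ for all } g,i \text{ with } |gs_i|=|g|+1\}$; it is a hom Markov tree shift if all $A_i$ equal a single matrix $A$. The graph representation of $X_{\mathbf{A}}$ is the directed graph with vertex set $\mathbf{V}=\mathcal{A}\times S_k$ and edge set $\mathbf{E}=\{((a,s_i),(b,s_j)): K(s_i,s_j)=1,\ A_j(a,b)=1\}$. $\mathbf{G}$ is strongly connected if for all $(a,s_i),(b,s_j)\in\mathbf{V}$ there is a walk (of some positive length) from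 $(a,s_i)$ to $(b,s_j)$. A vertex $(a,s_i)$ is a pivot if there exist $s_j\in S_k$ and $N\in\mathbb{N}$ such that for every $b\in\mathcal{A}$ there is a walk of length exactly $N$ from $(a,s_i)$ to $(b,s_j)$. A nonnegative square matrix is irreducible if for each pair of indices $(i,j)$ some power has positive $(i,j)$ entry, and primitive if some power has all entries positive. *)

(* Defs.v *)
From mathcomp Require Import all_boot all_algebra.
Set Implicit Arguments. Unset Strict Implicit. Unset Printing Implicit Defensive.
Import GRing.Theory.
Local Open Scope ring_scope.

Definition zero_one_mx (m : nat) (M : 'M[nat]_m) : Prop :=
  forall i j, (M i j <= 1)%N.

Definition irreducible_mx (m : nat) (M : 'M[nat]_m) : Prop :=
  forall i j, exists p : nat, (0 < p)%N /\ (0 < (M ^+ p) i j)%N.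

Definition primitive_mx (m : nat) (M : 'M[nat]_m) : Prop :=
  exists p : nat, (0 < p)%N /\ forall i j, (0 < (M ^+ p) i j)%N.

(* Graph representation of the hom Markov tree shift X_{(A,...,A)} on
   G = <S_k | K>: vertices (a, s_i) in 'I_n * 'I_k (alphabet 'I_n), and an
   edge (a,s_i) -> (b,s_j) iff K(s_i,s_j) = 1 and A(a,b) = 1. *)
Definition graph_rep_edge (n k : nat) (K : 'M[nat]_k) (A : 'M[nat]_n) :
  rel ('I_n * 'I_k) :=
  fun u v => (K u.2 v.2 == 1%N) && (A u.1 v.1 == 1%N).

Definition walk_of_length (V : eqType) (e : rel V) (N : nat) (u v : V) : Prop :=
  exists p : seq V, [/\ size p = N, path e u p & last u p = v].

Definition strongly_connected (V : finType) (e : rel V) : Prop :=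
  forall u v : V, exists N, (0 < N)%N /\ walk_of_length e N u v.

Definition is_pivot (n k : nat) (e : rel ('I_n * 'I_k)) (x : 'I_n * 'I_k) : Prop :=
  exists (j : 'I_k) (N : nat), forall b : 'I_n, walk_of_length e N x (b, j).

(* Main.v *)
Require Import Defs.
From mathcomp Require Import all_boot all_algebra.
From Stdlib Require Import Setoid.
Import GRing.Theory.
Set Implicit Arguments. Unset Strict Implicit.

Section Walks.
Variable (V : eqType) (e : rel V).
Notation W := (walk_of_length e).

Lemma W0 u v : W 0 u v <-> u = v.
Proof.
split; first by case=> [[|? ?] [//= _ _ ->]].
by move=> ->; exists [::].
Qed.

Lemma WS N u v : W N.+1 u v <-> exists w, e u w /\ W N w v.
Proof.
split.
  case=> [[|w p] [//= [Hs] /andP[Huw Hp] Hl]].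
  by exists w; split=> //; exists p.
case=> w [Huw [p [Hs Hp Hl]]]; exists (w :: p); split=> //=.
  by rewrite Hs.
by rewrite Huw.
Qed.

Lemma Wcat m n u w v : W m u w -> W n w v -> W (m + n) u v.
Proof.
elim: m u => [|m IH] u.
  by move/W0=> ->.
by case/WS=> x [Hux Hx] Hw; rewrite addSn; apply/WS; exists x; split=> //; apply: IH Hx Hw.
Qed.

Lemma Wsplit m n u v : W (m + n) u v -> exists w, W m u w /\ W n w v.
Proof.
elim: m u => [|m IH] u.
  by move=> H; exists u; split=> //; apply/W0.
rewrite addSn => /WS [x [Hux Hx]].
have [w [H1 H2]] := IH _ Hx.
by exists w; split=> //; apply/WS; exists x.
Qed.

Lemma Wmono m x :
  (forall v, exists u, e u v) -> (forall v, W m x v) ->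
  forall m', (m <= m')%N -> forall v, W m' x v.
Proof.
move=> Hin Hm m' /subnK <-; elim: (m' - m)%N => [|d IH] v; first by rewrite add0n.
have [u Huv] := Hin v.
rewrite addSn -addn1; apply: Wcat (IH u) _.
by apply/WS; exists v; split=> //; apply/W0.
Qed.

End Walks.

Definition mxpow n (M : 'M[nat]_n) p := (M ^+ p)%R.
Definition emx n (M : 'M[nat]_n) : rel 'I_n := fun x y => M x y == 1%N.

Lemma Wpow n (M : 'M[nat]_n) : zero_one_mx M ->
  forall p i j, (0 < mxpow M p i j)%N <-> walk_of_length (emx M) p i j.
Proof.
move=> H01; elim=> [|p IH] i j.
  rewrite /mxpow expr0 mxE; split; first by case: eqP => // -> _; apply/W0.
  by move/W0=> ->; rewrite eqxx.
rewrite /mxpow exprS -mulmxE mxE lt0n sum_nat_eq0; split.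
  move=> Hs; apply/WS; move: Hs.
  case/forallPn=> l /=; rewrite -lt0n muln_gt0 => /andP[H1 H2].
  exists l; split; last by apply/IH.
  by rewrite /emx eqn_leq H01.
case/WS=> l [H1 /IH H2]; apply/forallPn; exists l => /=.
by rewrite -lt0n muln_gt0 H2 andbT (eqP H1).
Qed.

Lemma Wprod k n (K : 'M[nat]_k) (A : 'M[nat]_n) N u v :
  walk_of_length (graph_rep_edge K A) N u v <->
  walk_of_length (emx A) N u.1 v.1 /\ walk_of_length (emx K) N u.2 v.2.
Proof.
elim: N u => [|N IH] u.
  rewrite !W0; case: u v => [a i] [b j] /=; split; first by case=> -> ->.
  by case=> -> ->.
rewrite !WS; split.
  case=> w [/andP[H1 H2] /IH [H3 H4]].
  by split; [exists w.1 | exists w.2].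
case=> [[a [Ha Wa]] [i [Hi Wi]]].
exists (a, i); split; first by rewrite /graph_rep_edge /=; apply/andP.
by apply/IH.
Qed.

Lemma irr_walk n (M : 'M[nat]_n) : zero_one_mx M ->
  irreducible_mx M <-> forall a b, exists p, (0 < p)%N /\ walk_of_length (emx M) p a b.
Proof.
move=> H01; split=> H a b; have [p [Hp HM]] := H a b; exists p; split=> //.
  exact/(Wpow H01).
exact/(Wpow H01).
Qed.

Lemma irr_in n (M : 'M[nat]_n) :
  (forall a b, exists p, (0 < p)%N /\ walk_of_length (emx M) p a b) ->
  forall v, exists u, emx M u v.
Proof.
move=> H v; have [p [Hp Hw]] := H v v.
move: Hw; rewrite -(subnK Hp) addn1 -(addn1 (p - 1)) => /Wsplit [u [_ Hu]].
by case/WS: Hu => x [Hux /W0 <-]; exists u.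
Qed.

Lemma prim_walk n (M : 'M[nat]_n) : zero_one_mx M -> primitive_mx M ->
  exists p, forall m, (p <= m)%N -> forall i j, walk_of_length (emx M) m i j.
Proof.
move=> H01 [p [Hp HM]]; exists p => m Hm i.
have Hin : forall v, exists u, emx M u v.
  apply: irr_in => a b; exists p; split=> //; exact/(Wpow H01).
apply: (Wmono Hin _ Hm) => v; exact/(Wpow H01).
Qed.

Theorem proposition5p3 (k n : nat) (K : 'M[nat]_k) (A : 'M[nat]_n) :
  (0 < k)%N -> (0 < n)%N ->
  zero_one_mx K -> zero_one_mx A -> primitive_mx K ->
  (strongly_connected (graph_rep_edge K A) <-> irreducible_mx A) /\
  ((strongly_connected (graph_rep_edge K A) /\
    exists x, is_pivot (graph_rep_edge K A) x) <-> primitive_mx A).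
Proof.
move=> Hk Hn HK HA PK.
have [pK HpK] := prim_walk HK PK.
set i0 : 'I_k := Ordinal Hk.
set a0 : 'I_n := Ordinal Hn.
have part1 : strongly_connected (graph_rep_edge K A) <-> irreducible_mx A.
  rewrite irr_walk //; split.
    move=> H a b; have [N [HN /Wprod [Wa _]]] := H (a, i0) (b, i0).
    by exists N.
  move=> H [a i] [b j].
  have [N1 [HN1 W1]] := H a b.
  have [c [Hc Wc]] := H b b.
  have Wt : forall t, walk_of_length (emx A) (N1 + t * c) a b.
    elim=> [|t IH]; first by rewrite mul0n addn0.
    by rewrite mulSn addnCA addnC; apply: Wcat IH Wc.
  exists (N1 + pK * c); split; first by rewrite addn_gt0 HN1.
  apply/Wprod; split; first exact: Wt.
  apply: HpK; apply: leq_trans (leq_addl _ _).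
  by rewrite leq_pmulr.
split=> //; split.
  case=> SC [[a i] [j [N Hpiv]]].
  have IA := (irr_walk HA).1 (part1.1 SC).
  have Hin := irr_in IA.
  have Wa : forall m, (N <= m)%N -> forall b, walk_of_length (emx A) m a b.
    apply: Wmono Hin _ => b; by have /Wprod [] := Hpiv b.
  have Hs : forall s : seq 'I_n, exists M, forall c, c \in s ->
      forall m, (M <= m)%N -> forall b, walk_of_length (emx A) m c b.
    elim=> [|c s [M HM]]; first by exists 0%N.
    have [L [_ HL]] := IA c a.
    exists (maxn M (L + N)) => c' ; rewrite inE => /orP [/eqP -> | Hc'] m Hm b.
      rewrite -(subnK (leq_trans (leq_addr N L) (leq_trans (leq_maxr M _) Hm))).
      rewrite addnC; apply: Wcat HL (Wa _ _ b).
      by rewrite leq_subRL ?(leq_trans (leq_addr N L) (leq_trans (leq_maxr M _) Hm)) //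
        (leq_trans (leq_maxr M _) Hm).
    by apply: HM => //; apply: leq_trans (leq_maxl _ _) Hm.
  have [M HM] := Hs (enum 'I_n).
  exists (maxn M 1); split; first by rewrite leq_max orbT.
  move=> c b; apply/(Wpow HA); apply: HM; first by rewrite mem_enum.
  exact: leq_maxl.
move=> PA.
have [pA HpA] := prim_walk HA PA.
split.
  apply/part1; case: PA => p [Hp HP] a b; exists p; split=> //.
exists (a0, i0), i0, (maxn pA pK) => b.
apply/Wprod; split; [apply: HpA | apply: HpK]; by rewrite ?leq_maxl ?leq_maxr.
Qed.
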